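(* Let $X$ be a Banach lattice and $S$ a convex $C_0$-semigroup on $X$. Let $x\in X$ with $\sup_{h\in(0,h_0]}\big\|\frac{S(h)x-x}{h}\big\|<\infty$ for some $h_0>0$. Then the map $[0,\infty)\to X$, $t\mapsto S(t)x$ is locally Lipschitz continuous, i.e. for every $T>0$ there exists $L_T\ge0$ with $\|S(t)x-S(s)x\|\le L_T|t-s|$ for all $s,t\in[0,T]$.
   Context: An operator $T\colon X\to X$ is convex if $T(\lambda x+(1-\lambda)y)\le\lambda Tx+(1-\lambda)Ty$ for all $x,y\in X$, $\lambda\in[0,1]$, and bounded if $\sup_{\|x\|\le r}\|Tx\|<\infty$ for all $r>0$. A convex $C_0$-semigroup is a family $(S(t))_{t\ge0}$ of bounded convex operators $X\to X$ with $S(0)=\mathrm{id}$, $S(t+s)=S(t)S(s)$ for all $s,t\ge0$, and $S(t)x\to x$ as $t\downarrow0$ for all $x$. *)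

(* Defs.v *)
From HB Require Import structures.
From mathcomp Require Import all_boot all_order all_algebra.
From mathcomp Require Import all_classical all_reals all_analysis.
Set Implicit Arguments. Unset Strict Implicit. Unset Printing Implicit Defensive.
Import Order.TTheory GRing.Theory Num.Theory.
Import numFieldNormedType.Exports.
Local Open Scope ring_scope.
Local Open Scope classical_set_scope.

Record banach_lattice (R : realType) (X : completeNormedModType R) := {
  bl_le : X -> X -> Prop;
  bl_join : X -> X -> X;
  bl_le_refl : forall x, bl_le x x;
  bl_le_trans : forall x y z, bl_le x y -> bl_le y z -> bl_le x z;
  bl_le_anti : forall x y, bl_le x y -> bl_le y x -> x = y;
  bl_join_ubl : forall x y, bl_le x (bl_join x y);
  bl_join_ubr : forall x y, bl_le y (bl_join x y);
  bl_join_lub : forall x y z, bl_le x z -> bl_le y z -> bl_le (bl_join x y) z;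
  bl_le_add : forall x y z, bl_le x y -> bl_le (x + z) (y + z);
  bl_le_scale : forall (a : R) x y, 0 <= a -> bl_le x y -> bl_le (a *: x) (a *: y);
  bl_norm_mono : forall x y,
    bl_le (bl_join x (- x)) (bl_join y (- y)) -> `|x| <= `|y|
}.

Definition convex_op (R : realType) (X : completeNormedModType R)
  (BL : banach_lattice X) (T : X -> X) : Prop :=
  forall (x y : X) (l : R), 0 <= l <= 1 ->
    bl_le BL (T (l *: x + (1 - l) *: y)) (l *: T x + (1 - l) *: T y).

Definition bounded_op (R : realType) (X : completeNormedModType R)
  (T : X -> X) : Prop :=
  forall r : R, 0 < r -> exists M : R, forall x : X, `|x| <= r -> `|T x| <= M.

(* convex C_0-semigroup; S t only matters for t >= 0 *)
Definition convex_C0_semigroup (R : realType) (X : completeNormedModType R)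
  (BL : banach_lattice X) (S : R -> X -> X) : Prop :=
  [/\ (forall t, 0 <= t -> convex_op BL (S t) /\ bounded_op (S t)),
      (forall x, S 0 x = x),
      (forall t s x, 0 <= t -> 0 <= s -> S (t + s) x = S t (S s x)) &
      (forall x, S t x @[t --> 0^'+] --> x)].

(* Main.v *)
Require Import Defs.
From HB Require Import structures.
From mathcomp Require Import all_boot all_order all_algebra.
From mathcomp Require Import all_classical all_reals all_analysis.
From mathcomp Require Import ring lra.
Import Order.TTheory GRing.Theory Num.Theory.
Import numFieldNormedType.Exports.
Local Open Scope ring_scope.

Module Helpers.
Local Open Scope classical_set_scope.


Section Lat.
Context {R : realType} {X : completeNormedModType R} {BL : banach_lattice X}.
Local Notation le := (bl_le BL).
Local Notation ab a := (bl_join BL a (- a)).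

Lemma le_trans' {a b c} : le a b -> le b c -> le a c.
Proof. exact: bl_le_trans. Qed.

Lemma le_addl {a b} c : le a b -> le (c + a) (c + b).
Proof. by move=> h; rewrite ![c + _]addrC; apply: bl_le_add. Qed.

Lemma le_add2 {a b c d} : le a b -> le c d -> le (a + c) (b + d).
Proof.
move=> h1 h2; apply: (le_trans' (bl_le_add c h1)); exact: le_addl.
Qed.

Lemma le_subr {a b} c : le a b -> le (a - c) (b - c).
Proof. exact: bl_le_add. Qed.

Lemma ab_ge0 u : le 0 (ab u).
Proof.
have h1 : le u (ab u) by apply: bl_join_ubl.
have h2 : le (- u) (ab u) by apply: bl_join_ubr.
have h3 : le 0 (ab u + ab u).
  by rewrite -(subrr u); apply: le_add2.
have h2p : 0 <= (2:R)^-1 by rewrite invr_ge0.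
have := bl_le_scale h2p h3.
by rewrite scaler0 -mulr2n -(scaler_nat 2 (ab u)) scalerA mulVf ?scale1r // pnatr_eq0.
Qed.

Lemma neg_le0 {u} : le 0 u -> le (- u) 0.
Proof.
move=> h; have := bl_le_add (- u) h; by rewrite add0r subrr.
Qed.

Lemma LL {a u v} : le a u -> le (- a) v -> `|a| <= `|u| + `|v|.
Proof.
move=> hu hv.
set w := ab u + ab v.
have hw : le (ab a) w.
  apply: bl_join_lub.
  - apply: (le_trans' hu); apply: (le_trans' (bl_join_ubl _ _ (- u))).
    rewrite /w -{1}(addr0 (ab u)); apply: le_addl; exact: ab_ge0.
  - apply: (le_trans' hv); apply: (le_trans' (bl_join_ubl _ _ (- v))).
    rewrite -{1}(add0r (ab v)) /w; apply: bl_le_add; exact: ab_ge0.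
have : `|a| <= `|w|.
  apply: bl_norm_mono; apply: (le_trans' hw); exact: bl_join_ubl.
move/le_trans; apply; apply: (le_trans (ler_normD _ _)).
have key z : `|ab z| <= `|z|.
  apply: bl_norm_mono; apply: bl_join_lub; first exact: bl_le_refl.
  apply: (le_trans' (neg_le0 (ab_ge0 z))); exact: ab_ge0.
by apply: lerD.
Qed.
End Lat.



Section Conv.
Context {R : realType} {X : completeNormedModType R} {BL : banach_lattice X}.
Local Notation le := (bl_le BL).

Lemma conv_sub {T : X -> X} (hT : convex_op BL T) l a b : 0 <= l <= 1 ->
  le (T (l *: a + (1 - l) *: b) - T b) (l *: (T a - T b)).
Proof.
move=> hl; have := le_subr (T b) (hT a b l hl).
suff -> : l *: T a + (1 - l) *: T b - T b = l *: (T a - T b) by [].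
by rewrite scalerBl scale1r scalerBr [T b - _]addrC addrA addrK.
Qed.

Lemma conv_pt {T : X -> X} (hT : convex_op BL T) l y1 y2 : 0 < l <= 1 ->
  le (T y1 - T y2) (l *: (T (y2 + l^-1 *: (y1 - y2)) - T y2)).
Proof.
case/andP=> l0 l1.
have := conv_sub hT l (y2 + l^-1 *: (y1 - y2)) y2.
have -> : l *: (y2 + l^-1 *: (y1 - y2)) + (1 - l) *: y2 = y1.
  rewrite scalerDr scalerA mulfV ?gt_eqF // scale1r scalerBl scale1r.
  by rewrite addrC addrA subrK addrC subrK.
by apply; rewrite ltW.
Qed.

Lemma lip {T : X -> X} (hT : convex_op BL T) c (r K : R) : 0 < r ->
  (forall z, `|z - c| <= r -> `|T z| <= K) ->
  forall y1 y2, `|y1 - c| <= r / 2 -> `|y2 - c| <= r / 2 ->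
  `|T y1 - T y2| <= 8 * K / r * `|y1 - y2|.
Proof.
move=> r0 hK y1 y2 h1 h2.
have K0 : 0 <= K.
  by apply: le_trans (normr_ge0 (T c)) (hK c _); rewrite subrr normr0 ltW.

have r2 : r / 2 <= r.
  lra.
set d := `|y1 - y2|.
have [d0|dpos] := eqVneq d 0.
  move/eqP: d0; rewrite /d normr_eq0 subr_eq0 => /eqP ->.
  by rewrite !subrr !normr0 mulr0.
have dgt0 : 0 < d by rewrite lt_neqAle eq_sym dpos normr_ge0.
have [dbig|dsmall] := leP (r / 2) d.
  apply: (le_trans (ler_normB _ _)).
  apply: (@le_trans _ _ (K + K)).
    by apply: lerD; apply: hK; apply: le_trans r2.
  have e : 8 * K / r * (r / 2) = 4 * K.
    by field; rewrite gt_eqF.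
  apply: (@le_trans _ _ (8 * K / r * (r / 2))); last first.
    by apply: ler_wpM2l => //; rewrite !mulr_ge0 // ?invr_ge0 ltW.
  rewrite e; lra.
set l := d / (r / 2).
have l0 : 0 < l by rewrite divr_gt0 // divr_gt0.
have l1 : l <= 1 by rewrite ler_pdivrMr ?divr_gt0 // mul1r ltW.
have lK : l^-1 * d = r / 2.
  by rewrite /l; field; rewrite ?gt_eqF.
have E : 8 * K / r * d = l * (4 * K) by rewrite /l; field; rewrite gt_eqF.
clearbody l.
have hz (a b : X) : `|b - c| <= r / 2 -> `|a - b| = d ->
    `|T (b + l^-1 *: (a - b)) - T b| <= K + K.
  move=> hb hab; apply: (le_trans (ler_normB _ _)); apply: lerD; apply: hK => //.
    rewrite addrAC; apply: (le_trans (ler_normD _ _)).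
    rewrite normrZ hab gtr0_norm ?invr_gt0 // lK; lra.
  exact: le_trans r2.
have hl : 0 < l <= 1 by rewrite l0 l1.
have A1 := conv_pt hT l y1 y2 hl.
have A2 := conv_pt hT l y2 y1 hl.
rewrite -[T y2 - T y1]opprB in A2.
apply: le_trans (LL A1 A2) _.
rewrite !normrZ (gtr0_norm l0).
have B1 := hz y1 y2 h2 erefl.
have B2 := hz y2 y1 h1 (esym (distrC y1 y2)).
rewrite E -mulrDr; apply: ler_wpM2l; [exact: ltW | lra].
Qed.
End Conv.



Section Open.
Context {R : realType} {X : completeNormedModType R} {BL : banach_lattice X}.
Local Notation le := (bl_le BL).

Lemma open_gtT {T : X -> X} (hT : convex_op BL T) (hb : bounded_op T) (m : R) :
  open [set y | m < `|T y|].
Proof.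
rewrite openE => y /= hy; rewrite /interior; apply/nbhs_ballP.
have [K hK] := hb (`|y| + 1) (ltr_pwDr ltr01 (normr_ge0 y)).
have hK' : forall z, `|z - y| <= 1 -> `|T z| <= K.
  move=> z hz; apply: hK; rewrite -(subrK y z).
  by apply: le_trans (ler_normD _ _) _; rewrite addrC lerD.
have hl := lip hT y 1 K ltr01 hK'.
have K0 : 0 <= K by apply: le_trans (normr_ge0 (T y)) (hK' y _); rewrite subrr normr0.
pose e := Num.min (1 / 2) ((`|T y| - m) / (8 * K + 1)).
have e0 : 0 < e.
  rewrite lt_min; apply/andP; split; [lra|apply: divr_gt0; lra].
exists e => //= w; rewrite -ball_normE /= => hw.
have hw1 : `|w - y| < 1 / 2 by rewrite distrC; apply: lt_le_trans hw _; rewrite ge_min lexx.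
have hw2 : `|w - y| < (`|T y| - m) / (8 * K + 1).
  by rewrite distrC; apply: lt_le_trans hw _; rewrite ge_min lexx orbT.
have := hl w y (ltW hw1); rewrite subrr normr0 => /(_ ltac:(lra)).
move=> hd.
have h3 : `|T y| - `|T w| <= `|T w - T y|.
  by rewrite distrC; apply: le_trans (lerB_dist _ _).
have h4 : `|w - y| * (8 * K + 1) < `|T y| - m by rewrite -ltr_pdivlMr //; lra.
rewrite divr1 in hd.
have := normr_ge0 (w - y); nra.
Qed.
End Open.



Section CUBP.
Context {R : realType} {X : completeNormedModType R} {BL : banach_lattice X}.
Local Notation le := (bl_le BL).

Lemma baire_ball (T : nat -> X -> X) (hT : forall n, convex_op BL (T n))
  (hb : forall n, bounded_op (T n))
  (hp : forall y, exists M, forall n, `|T n y| <= M) :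
  exists y0 r (m : R), 0 < r /\ forall y, `|y0 - y| < r -> forall n, `|T n y| <= m.
Proof.
pose O (i : nat) := \bigcup_(n in [set: nat]) [set y | i%:R < `|T n y|].
have Oo i : open (O i).
  by apply: bigcup_open => n _; exact: (open_gtT (hT n) (hb n)).
have [i ndi] : exists i, ~ dense (O i).
  apply: contrapT => /forallNP hall.
  have hd : forall i, open (O i) /\ dense (O i).
    by move=> i; split => //; apply: contrapT; apply: hall.
  have /(_ setT) := Baire hd.
  case; [by exists 0 | exact: openT | ] => y [_ hy].
  have [M hM] := hp y.
  have [n _ hn] := hy (Num.truncn `|M|).+1 I.
  have := hM n; have := truncnS_gt `|M|; have := ler_norm M.
  move: hn => /=; lra.
have [U0 [ [x0 [oU Ux0] ] hI] ] := denseNE ndi.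
rewrite openE in oU.
have := oU x0 Ux0; rewrite /interior => /nbhs_ballP [r r0 hr].
exists x0, r, i%:R; split => // y hy n.
rewrite leNgt; apply/negP => hlt.
have : (U0 `&` O i) y.
  split; first by apply: hr; rewrite -ball_normE.
  by exists n.
by rewrite hI.
Qed.
End CUBP.



Section CUBP2.
Context {R : realType} {X : completeNormedModType R} {BL : banach_lattice X}.
Local Notation le := (bl_le BL).
Local Notation h := ((2 : R)^-1).

Lemma hh (x : X) : h *: (x + x) = x.
Proof. by rewrite -mulr2n -(scaler_nat 2 x) scalerA mulVf ?scale1r // pnatr_eq0. Qed.

Lemma h1eq : 1 - h = h :> R.
Proof. by field. Qed.

Lemma normh (x : X) : `|h *: x| <= `|x|.
Proof.
rewrite normrZ ger0_norm ?invr_ge0 //.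
have := normr_ge0 x; nra.
Qed.

Lemma mid {T : X -> X} (hT : convex_op BL T) a b :
  le (T (h *: a + h *: b)) (h *: T a + h *: T b).
Proof.
have := hT a b h; rewrite h1eq; apply.
apply/andP; split; [by rewrite invr_ge0 | by rewrite invf_le1 // ler1n].
Qed.

Lemma neg_mid A B C : le C (h *: A + h *: B) -> le (- A) (B - (C + C)).
Proof.
move=> hc.
have h2 : 0 <= (2 : R) by [].
have := bl_le_scale h2 hc.
rewrite -scalerDr scalerA mulfV ?pnatr_eq0 // scale1r (scaler_nat 2 C) mulr2n => hc2.
have := bl_le_add (- A - (C + C)) hc2.
by rewrite addrC subrK addrA [A + B]addrC addrK.
Qed.

Lemma cubp (T : nat -> X -> X) (hT : forall n, convex_op BL (T n))
  (hb : forall n, bounded_op (T n))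
  (hp : forall y, exists M, forall n, `|T n y| <= M) (c : X) :
  exists rho K, 0 < rho /\ forall n z, `|z - c| <= rho -> `|T n z| <= K.
Proof.
have [y0 [r [m [r0 hm]]]] := baire_ball T hT hb hp.
pose p := (c + c) - y0.
have [Mp hMp] := hp p.
have [Mc hMc] := hp c.
pose b w := y0 + ((w - c) + (w - c)).
have up : forall n w, `|w - c| <= r / 4 ->
    le (T n w) (h *: T n (b w) + h *: T n p) /\
    `|h *: T n (b w) + h *: T n p| <= m + Mp.
  move=> n w hw.
  have hbw : `|y0 - b w| < r.
    rewrite /b opprD addrA subrr add0r normrN.
    apply: le_lt_trans (ler_normD _ _) _; lra.
  split.
    have E : h *: b w + h *: p = w :> X.
      rewrite -scalerDr /b /p addrC addrA subrK.
      by rewrite addrACA [c + (w - c)]addrC subrK hh.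
    by have := mid (hT n) (b w) p; rewrite E.
  apply: le_trans (ler_normD _ _) _; apply: lerD.
    by apply: le_trans (normh _) _; apply: hm.
  by apply: le_trans (normh _) _; apply: hMp.
exists (r / 4), ((m + Mp) + ((m + Mp) + (Mc + Mc))); split; first lra.
move=> n z hz.
pose z' := (c + c) - z.
have hz' : `|z' - c| <= r / 4.
  by rewrite /z' addrAC addrK -normrN opprB.
have [u1 n1] := up n z hz.
have [u2 n2] := up n z' hz'.
have hc : le (T n c) (h *: T n z + h *: T n z').
  have E : h *: z + h *: z' = c.
    by rewrite -scalerDr /z' addrC subrK hh.
  by have := mid (hT n) z z'; rewrite E.
have l2 := neg_mid _ _ _ hc.
have l3 := bl_le_trans l2 (le_subr (T n c + T n c) u2).
apply: le_trans (LL u1 l3) _; apply: lerD => //.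
apply: le_trans (ler_normB _ _) _; apply: lerD => //.
by apply: le_trans (ler_normD _ _) _; apply: lerD.
Qed.
End CUBP2.



Section Semi.
Context {R : realType} {X : completeNormedModType R} {BL : banach_lattice X}.

Lemma right_eps (S : R -> X -> X) y : S t y @[t --> 0^'+] --> y ->
  exists e, 0 < e /\ forall t, 0 < t < e -> `|S t y| <= `|y| + 1.
Proof.
move/cvgrPdist_lt => /(_ 1 ltr01).
rewrite near_withinE => /nbhs_ballP [e e0 he].
exists e; split => // t /andP [t0 te].
have := he t; rewrite -ball_normE /= sub0r normrN gtr0_norm // => /(_ te t0).
move=> h; rewrite -(subrK y (S t y)).
apply: le_trans (ler_normD _ _) _; rewrite distrC in h; lra.
Qed.

Lemma finmax (f : nat -> R) N : exists M, forall n, (n < N)%N -> f n <= M.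
Proof.
elim: N => [|N [M hM]]; first by exists 0.
exists (Num.max M (f N)) => n; rewrite ltnS leq_eqVlt => /orP [/eqP ->|hn].
  by rewrite le_max lexx orbT.
by rewrite le_max hM.
Qed.

Lemma pw (S : R -> X -> X) (hS : convex_C0_semigroup BL S) (tt : nat -> R)
  (ht : forall n, 0 <= tt n <= (n.+1%:R)^-1) y :
  exists M, forall n, `|S (tt n) y| <= M.
Proof.
case: hS => _ S0 _ Sc.
have [e [e0 he]] := right_eps S y (Sc y).
have [M hM] := finmax (fun n => `|S (tt n) y|) (Num.truncn e^-1).
exists (Num.max M (`|y| + 1)) => n.
case: (ltnP n (Num.truncn e^-1)) => hn.
  by rewrite le_max hM.
rewrite le_max; apply/orP; right.
have [/andP [t0 t1]] := (ht n, truncnS_gt e^-1).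
rewrite le_eqVlt in t0; case/orP: t0 => [/eqP <-|t0].
  by rewrite S0; lra.
move=> hlt; apply: he; rewrite t0 /=.
apply: le_lt_trans t1 _.
rewrite -(invrK e) ltf_pV2 ?posrE ?invr_gt0 //.
apply: lt_le_trans hlt _; rewrite ler_nat; by [].
Qed.

Lemma claimA (S : R -> X -> X) (hS : convex_C0_semigroup BL S) (x : X) :
  exists d rho K, 0 < d /\ 0 < rho /\
    forall t z, 0 <= t <= d -> `|z - x| <= rho -> `|S t z| <= K.
Proof.
apply: contrapT => hn.
have hex : forall n : nat, exists tz : R * X,
    0 <= tz.1 <= (n.+1%:R)^-1 /\ `|tz.2 - x| <= (n.+1%:R)^-1 /\
    n%:R < `|S tz.1 tz.2|.
  move=> n; apply: contrapT => hne; apply: hn.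
  exists (n.+1%:R)^-1, (n.+1%:R)^-1, n%:R; split; first by rewrite invr_gt0.
  split; first by rewrite invr_gt0.
  move=> t z ht hz; rewrite leNgt; apply/negP => hlt; apply: hne.
  by exists (t, z).
have [f hf] := choice hex.
have hS' := hS; case: hS' => hSt _ _ _.
pose T n := S (f n).1.
have hT n : convex_op BL (T n).
  by have [/andP [h0 _] _] := hf n; have [] := hSt _ h0.
have hb n : bounded_op (T n).
  by have [/andP [h0 _] _] := hf n; have [] := hSt _ h0.
have hp : forall y, exists M, forall n, `|T n y| <= M.
  by move=> y; apply: (pw S hS (fun n => (f n).1)) => n; have [] := hf n.
have [rho [K [rho0 hK]]] := cubp T hT hb hp x.
pose n := (Num.truncn (`|K| + rho^-1)).+1.
have hn1 := truncnS_gt (`|K| + rho^-1).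
have [_ [h2 h3]] := hf n.
have hKn : `|T n (f n).2| <= K.
  apply: hK; move: h2 => /le_trans; apply.
  rewrite -(invrK rho) lef_pV2 ?posrE ?invr_gt0 //.
  have e1 : n%:R = (Num.truncn (`|K| + rho^-1)).+1%:R :> R by [].
  have := normr_ge0 K.
  rewrite -addn1 natrD; lra.
have e1 : n%:R = (Num.truncn (`|K| + rho^-1)).+1%:R :> R by [].
have := ler_norm K; have : 0 <= rho^-1 by rewrite invr_ge0 ltW.
rewrite /T in hKn; lra.
Qed.
End Semi.

End Helpers.
Import Helpers.

Theorem proposition2p7 (R : realType) (X : completeNormedModType R)
  (BL : banach_lattice X) (S : R -> X -> X) (x : X) :
  convex_C0_semigroup BL S ->
  (exists h0 : R, 0 < h0 /\ exists M : R,
     forall h : R, 0 < h <= h0 -> `|h^-1 *: (S h x - x)| <= M) ->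
  forall T : R, 0 < T -> exists L : R, 0 <= L /\
    forall s t : R, 0 <= s <= T -> 0 <= t <= T ->
      `|S t x - S s x| <= L * `|t - s|.
Proof.
move=> hS [h0 [h0pos [M hM]]] T T0.
have [d [rho [K0 [d0 [rho0 hK0]]]]] := claimA S hS x.
have hS' := hS; case: hS' => hSt S0 Ssg Sc.
have K00 : 0 <= K0.
  apply: le_trans (normr_ge0 (S 0 x)) (hK0 0 x _ _).
    by rewrite lexx ltW.
  by rewrite subrr normr0 ltW.
have hk : forall k : nat, exists Mk, forall w, `|w| <= K0 -> `|S (k%:R * d) w| <= Mk.
  move=> k; have hkd : 0 <= k%:R * d by rewrite mulr_ge0 // ltW.
  have [_ hb] := hSt _ hkd.
  have [Mk hMk] := hb (K0 + 1) ltac:(lra).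
  exists Mk => w hw; apply: hMk; lra.
have [g hg] := choice hk.
pose N := Num.truncn (T / d).
have [Kb hKb] := finmax g N.+1.
have bound : forall t z, 0 <= t <= T -> `|z - x| <= rho -> `|S t z| <= Kb.
  move=> t z /andP [t0 tT] hz.
  have td0 : 0 <= t / d by rewrite divr_ge0 // ltW.
  have /andP [k1 k2] := truncn_itv td0.
  set k := Num.truncn (t / d) in k1 k2.
  have kN : (k <= N)%N.
    by apply: le_truncn; rewrite ler_pM2r ?invr_gt0.
  pose u := t - k%:R * d.
  have u0 : 0 <= u.
    by rewrite /u subr_ge0 -ler_pdivlMr.
  have ud : u <= d.
    rewrite -addn1 natrD in k2.
    have h' : t < k%:R * d + d.
      by rewrite -[X in _ + X]mul1r -mulrDl -ltr_pdivrMr.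
    rewrite /u; lra.
  have -> : t = k%:R * d + u by rewrite /u addrC subrK.
  rewrite Ssg; last 2 first.
    by rewrite mulr_ge0 // ltW.
    by [].
  have h1 : `|S u z| <= K0 by apply: hK0; rewrite ?u0 ?ud.
  have := hg k _ h1; have : (k < N.+1)%N by rewrite ltnS.
  move/hKb; lra.
have Kb0 : 0 <= Kb.
  apply: le_trans (normr_ge0 (S 0 x)) (bound 0 x _ _).
    by rewrite lexx ltW.
  by rewrite subrr normr0 ltW.
have M0 : 0 <= M.
  apply: le_trans (normr_ge0 _) (hM h0 _); by rewrite h0pos lexx.
have hL : forall t, 0 <= t <= T -> forall y1 y2, `|y1 - x| <= rho / 2 ->
    `|y2 - x| <= rho / 2 -> `|S t y1 - S t y2| <= 8 * Kb / rho * `|y1 - y2|.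
  move=> t ht; have t0 : 0 <= t by case/andP: ht.
  have [hc _] := hSt t t0.
  apply: (lip hc x rho Kb rho0) => z hz; exact: bound.
pose h1 := Num.min h0 (rho / (2 * (M + 1))).
have h10 : 0 < h1.
  by rewrite lt_min h0pos /=; apply: divr_gt0 => //; lra.
have h1h0 : h1 <= h0 by rewrite ge_min lexx.
have h1r : h1 * (2 * (M + 1)) <= rho.
  rewrite -ler_pdivlMr; last lra.
  by rewrite ge_min lexx orbT.
have hSh : forall h, 0 < h <= h1 -> `|S h x - x| <= h * M.
  move=> h /andP [hp hh1].
  have := hM h; rewrite hp /= (le_trans hh1 h1h0) => /(_ isT).
  rewrite normrZ gtr0_norm ?invr_gt0 // -ler_pdivlMl ?invr_gt0 // invrK //.
pose L := 8 * Kb / rho * M + 2 * Kb / h1.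
have L1 : 0 <= 8 * Kb / rho by rewrite !mulr_ge0 // invr_ge0 ltW.
have L2 : 0 <= 2 * Kb / h1 by rewrite !mulr_ge0 // invr_ge0 ltW.
exists L; split; first by rewrite /L addr_ge0 // mulr_ge0.
have main : forall s t, 0 <= s <= T -> 0 <= t <= T -> s <= t ->
    `|S t x - S s x| <= L * `|t - s|.
  move=> s t hs ht hst.
  rewrite (ger0_norm (x := t - s)) ?subr_ge0 //.
  have [big|small] := ltP h1 (t - s).
    apply: le_trans (ler_normB _ _) _.
    have b1 := bound t x ht; have b2 := bound s x hs.
    rewrite subrr normr0 in b1 b2.
    have := b1 (ltW rho0); have := b2 (ltW rho0) => c1 c2.
    have : 2 * Kb <= 2 * Kb / h1 * (t - s).
      rewrite -mulrA ler_peMr ?mulr_ge0 //.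
      by rewrite ler_pdivlMl // mulr1 ltW.
    have : 0 <= 8 * Kb / rho * M * (t - s).
      apply: mulr_ge0; [exact: mulr_ge0 L1 M0 | lra].
    rewrite /L mulrDl; lra.
  have [e|ne] := eqVneq t s.
    by rewrite e !subrr normr0 mulr0.
  have hpos : 0 < t - s by rewrite subr_gt0 lt_neqAle eq_sym ne hst.
  have -> : t = s + (t - s) by rewrite addrC subrK.
  have s0 : 0 <= s by case/andP: hs.
  rewrite Ssg //; last exact: ltW.
  have hx : `|S (t - s) x - x| <= (t - s) * M by apply: hSh; rewrite hpos small.
  have hx2 : `|S (t - s) x - x| <= rho / 2.
    apply: le_trans hx _.
    have : (t - s) * M <= h1 * M by apply: ler_wpM2r.
    nra.
  have := hL s hs (S (t - s) x) x hx2; rewrite subrr normr0 => /(_ ltac:(lra)) hl.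
  apply: le_trans hl _.
  apply: le_trans (ler_wpM2l L1 hx) _.
  have : 0 <= 2 * Kb / h1 * (t - s) by apply: mulr_ge0 => //; lra.
  rewrite /L mulrDl; lra.
move=> s t hs ht; case: (leP s t) => hst; first exact: main.
rewrite distrC [`|t - s|]distrC; apply: main => //; exact: ltW.
Qed.
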